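(* Let $\mathcal{X},\mathcal{Y}$ be finite sets, $\mathcal{S}\subseteq\mathcal{X}\times\mathcal{Y}$, and $f:\mathcal{S}\to\{0,1\}$ with $f^{-1}(0)$ and $f^{-1}(1)$ both nonempty. Let $\sigma$ be the uniform distribution on $\mathcal{X}\times\mathcal{Y}$ and, for $b\in\{0,1\}$, $\sigma_b$ the uniform distribution on $f^{-1}(b)$. Suppose $c>0$ is such that for every rectangle $R\subseteq\mathcal{X}\times\mathcal{Y}$ and every $b\in\{0,1\}$, $$\sigma_b(R\cap f^{-1}(b))\ge0.8\,\sigma(R)-c.$$ Then for every $\varepsilon\ge0$, $\overline{\mathrm{prt}}_\varepsilon(f)\ge\frac{1}{c}(0.8-2.8\varepsilon)$.
   Context: Rectangles are $A\times B$ with $A\subseteq\mathcal{X}$, $B\subseteq\mathcal{Y}$ (including the empty one). For a distribution $\mu$ on $\mathcal{X}\times\mathcal{Y}$, $\overline{\mathrm{prt}}^\mu_\varepsilon(f)$ is the value of: minimize $1/\eta$ over $\eta>0$ and $p_{R,z}\ge0$ ($R$ all rectangles, $z\in\{0,1\}$) s.t. (i) $\sum_{(x,y)\in\mathcal{S}}\mu(x,y)\sum_{R\ni(x,y)}p_{R,f(x,y)}+\sum_{(x,y)\notin\mathcal{S}}\mu(x,y)\sum_{z,R\ni(x,y)}p_{R,z}\ge(1-\varepsilon)\eta$; (ii) $\forall(x,y)\in\mathcal{X}\times\mathcal{Y}$: $\sum_{z,R\ni(x,y)}p_{R,z}\le\eta$; (iii) $\sum_{R,z}p_{R,z}=1$.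 $\overline{\mathrm{prt}}_\varepsilon(f)=\max_\mu\overline{\mathrm{prt}}^\mu_\varepsilon(f)$. *)

(* Defs.v *)
From HB Require Import structures.
From mathcomp Require Import all_boot all_order all_algebra.
Set Implicit Arguments. Unset Strict Implicit. Unset Printing Implicit Defensive.
Import Order.TTheory GRing.Theory Num.Theory.
Local Open Scope ring_scope.

Section Defs.
Variables (R : realFieldType) (X Y : finType).

Definition is_rect (Rt : {set X * Y}) : bool :=
  [exists A : {set X}, exists B : {set Y}, Rt == setX A B].

(* f^{-1}(b), for f defined on S (values of f outside S are irrelevant). *)
Definition fpre (S : {set X * Y}) (f : X * Y -> bool) (b : bool) : {set X * Y} :=
  [set u in S | f u == b].

Definition unif (D E : {set X * Y}) : R := (#|E :&: D|)%:R / (#|D|)%:R.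

Definition is_distr (mu : X * Y -> R) : Prop :=
  (forall u, 0 <= mu u) /\ \sum_u mu u = 1.

Definition cover (p : {set X * Y} -> bool -> R) (u : X * Y) (z : bool) : R :=
  \sum_(Rt : {set X * Y} | is_rect Rt && (u \in Rt)) p Rt z.

(* feasibility of (eta, p) for the LP defining prt^mu_eps(f) *)
Definition prt_feasible (mu : X * Y -> R) (S : {set X * Y}) (f : X * Y -> bool)
  (eps eta : R) (p : {set X * Y} -> bool -> R) : Prop :=
  [/\ 0 < eta,
      (forall Rt z, is_rect Rt -> 0 <= p Rt z),
      \sum_(u in S) mu u * cover p u (f u)
        + \sum_(u in ~: S) mu u * (\sum_(z : bool) cover p u z) >= (1 - eps) * eta,
      (forall u, \sum_(z : bool) cover p u z <= eta)
    & \sum_(Rt : {set X * Y} | is_rect Rt) \sum_(z : bool) p Rt z = 1].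

(* "prt_eps(f) = max_mu min_{feasible} 1/eta  >=  t" *)
Definition prt_ge (S : {set X * Y}) (f : X * Y -> bool) (eps t : R) : Prop :=
  exists mu : X * Y -> R, is_distr mu /\
    forall (eta : R) (p : {set X * Y} -> bool -> R),
      prt_feasible mu S f eps eta p -> t <= 1 / eta.

End Defs.

(* Main.v *)
Require Import Defs.
From HB Require Import structures.
From mathcomp Require Import all_boot all_order all_algebra.
From mathcomp Require Import ring lra.
Import Order.TTheory GRing.Theory Num.Theory.
Local Open Scope ring_scope.

Lemma sum_ind (R : realFieldType) (T : finType) (A B : {set T}) :
  \sum_(u in A) ((u \in B)%:R : R) = (#|A :&: B|)%:R.
Proof.
rewrite -sum1_card natr_sum big_mkcond [RHS]big_mkcond /=.
apply: eq_bigr => u _; rewrite inE; by case: (u \in A); case: (u \in B).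
Qed.

Lemma sum_ind_all (R : realFieldType) (T : finType) (B : {set T}) :
  \sum_u ((u \in B)%:R : R) = (#|B|)%:R.
Proof.
rewrite -[in RHS](setTI B) -sum_ind; apply: eq_bigl => u; by rewrite in_setT.
Qed.

Theorem mainTheorem8 (R : realFieldType) (X Y : finType)
  (S : {set X * Y}) (f : X * Y -> bool) (c : R) :
  (exists u, u \in fpre S f false) ->
  (exists u, u \in fpre S f true) ->
  0 < c ->
  (forall (Rt : {set X * Y}) (b : bool), is_rect Rt ->
     unif R (fpre S f b) (Rt :&: fpre S f b) >= 4%:R / 5%:R * unif R [set: X * Y] Rt - c) ->
  forall eps : R, 0 <= eps ->
    prt_ge S f eps ((4%:R / 5%:R - 14%:R / 5%:R * eps) / c).
Proof.
move=> [u0 Hu0] [u1 Hu1] c0 Hyp eps eps0.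
set F := fpre S f.
have nF : forall b, 0 < ((#|F b|)%:R : R).
  by case; rewrite ltr0n; apply/card_gt0P; [exists u1 | exists u0].
set N : R := (#|[set: X * Y]|)%:R.
have N0 : 0 < N by rewrite ltr0n; apply/card_gt0P; exists u0; rewrite in_setT.
pose a b : R := (5%:R/14%:R) / (#|F b|)%:R.
pose d : R := (2%:R/7%:R) / N.
pose ind b u : R := (u \in F b)%:R.
pose w u := a false * ind false u + a true * ind true u.
pose mu u := w u + d.
have a0 : forall b, 0 <= a b by move=> b; rewrite !divr_ge0 ?ler0n ?ltW.
have d0 : 0 <= d by rewrite !divr_ge0 ?ler0n ?ltW.
have ind0 : forall b u, 0 <= ind b u by move=> b u; rewrite ler0n.
have w0 : forall u, 0 <= w u by move=> u; rewrite addr_ge0 // mulr_ge0.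
have aF : forall b, a b * (#|F b|)%:R = 5%:R/14%:R.
  by move=> b; rewrite /a divfK // gt_eqF.
have sumw : \sum_u w u = 5%:R/7%:R.
  rewrite big_split /= -!mulr_sumr !sum_ind_all !aF; lra.
exists mu; split.
  split; first by move=> u; rewrite addr_ge0.
  rewrite big_split /= sumw sumr_const -[d *+ _]mulr_natr -cardsT -/N /d divfK ?gt_eqF //.
  idtac.
  lra.
move=> eta p [eta0 p0 Hi Hii Hiii].
pose ok (u : X * Y) (z : bool) : R := ((u \notin S) || (f u == z))%:R.
pose g (u : X * Y) (z : bool) : R := mu u * ok u z - w u.
pose h (Rt : {set X * Y}) (z : bool) : R := \sum_(u in Rt) g u z.
have hw : forall b u, a b * ind b u <= w u.
  move=> [] u; rewrite /w.
    by rewrite lerDr mulr_ge0.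
  by rewrite lerDl mulr_ge0.
have hbound : forall Rt z, is_rect Rt -> h Rt z <= 5%:R/14%:R * c.
  move=> Rt z HR.
  have gle : forall u, g u z <= d - a (~~z) * ind (~~z) u.
    move=> u; have := hw (~~ z) u; rewrite /g /mu /ok /ind /F /fpre inE.
    case: (u \in S); case: (f u); case: z => /= H; lra.
  rewrite /h; apply: le_trans (ler_sum _ (fun u _ => gle u)) _.
  rewrite sumrB sumr_const -mulr_sumr sum_ind.
  have := Hyp Rt (~~ z) HR; rewrite /unif setIT -setIA setIid -/F -/N.
  have -> : d *+ #|Rt| = 2%:R/7%:R * ((#|Rt|)%:R / N) by rewrite -mulr_natr /d; ring.
  have -> : a (~~ z) * (#|Rt :&: F (~~ z)|)%:R = 5%:R/14%:R * ((#|Rt :&: F (~~ z)|)%:R / (#|F (~~ z)|)%:R) by rewrite /a; ring.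
  lra.
have G1 : \sum_(Rt | is_rect Rt) \sum_(z : bool) p Rt z * h Rt z <= 5%:R/14%:R * c.
  have -> : 5%:R/14%:R * c = (\sum_(Rt | is_rect Rt) \sum_(z : bool) p Rt z) * (5%:R/14%:R * c)
    by rewrite Hiii mul1r.
  rewrite mulr_suml; apply: ler_sum => Rt HR; rewrite mulr_suml; apply: ler_sum => z _.
  by rewrite ler_wpM2l ?p0 ?hbound.
have G2 : \sum_(Rt | is_rect Rt) \sum_(z : bool) p Rt z * h Rt z =
          \sum_u \sum_(z : bool) g u z * Defs.cover p u z.
  rewrite exchange_big [RHS]exchange_big /=; apply: eq_bigr => z _.
  under eq_bigr do rewrite /h mulr_sumr.
  rewrite (exchange_big_dep predT) //=; apply: eq_bigr => u _.
  rewrite /Defs.cover mulr_sumr; apply: eq_bigr => Rt _; apply: mulrC.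
have G3 : \sum_u \sum_(z : bool) mu u * ok u z * Defs.cover p u z =
   \sum_(u in S) mu u * Defs.cover p u (f u)
        + \sum_(u in ~: S) mu u * (\sum_(z : bool) Defs.cover p u z).
  rewrite (bigID (fun u => u \in S)) /=; congr (_ + _).
    apply: eq_big => [u|u uS]; first by [].
    rewrite big_bool /ok uS /=; case: (f u) => /=;
      by rewrite ?mulr1 ?mulr0 ?mul0r ?addr0 ?add0r.
  apply: eq_big => [u|u uS]; first by rewrite inE.
  rewrite /ok uS /= mulr_sumr; apply: eq_bigr => z _; by rewrite mulr1.
have G4 : \sum_u w u * \sum_(z : bool) Defs.cover p u z <= 5%:R/7%:R * eta.
  rewrite -sumw mulr_suml; apply: ler_sum => u _; by rewrite ler_wpM2l.
have G5 : \sum_u \sum_(z : bool) g u z * Defs.cover p u z =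
   \sum_u \sum_(z : bool) mu u * ok u z * Defs.cover p u z - \sum_u w u * \sum_(z : bool) Defs.cover p u z.
  rewrite -sumrB; apply: eq_bigr => u _; rewrite mulr_sumr -sumrB; apply: eq_bigr => z _.
  by rewrite /g mulrBl.
have key : (4%:R / 5%:R - 14%:R / 5%:R * eps) * eta <= c.
  move: Hi; rewrite -G3 => Hi; move: G1; rewrite G2 G5 => G1; lra.
by rewrite ler_pdivrMr // mul1r [eta^-1 * c]mulrC ler_pdivlMr.
Qed.
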